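(* Let $\theta:\mathbb{R}^n\to\mathbb{R}^K$, $x^\star\in\mathbb{R}^n$, $u\in\mathbb{R}^n$, a matrix $J\in\mathbb{R}^{K\times n}$ and a class index $k^\star\in\{1,\dots,K\}$ be such that $\theta(x^\star+\alpha u)-\theta(x^\star)=\alpha Ju$ for all $\alpha>0$. Set $\tilde{x}=x^\star+\alpha u$ and $\Delta\ell(\alpha)=\ell(\tilde{x},\bm{e}_{k^\star};\theta)-\ell(x^\star,\bm{e}_{k^\star};\theta)$. If $\ell=\ell_{CE}$ is the cross-entropy loss, then $$\lim_{\alpha\to\infty}\frac{\Delta\ell_{CE}(\alpha)}{\alpha}=\max_i(Ju)_i-(Ju)_{k^\star}.$$ If $\ell=\ell_{DLR}$ is the DLR loss, then $$\lim_{\alpha\to\infty}\frac{\Delta\ell_{DLR}(\alpha)}{\alpha}=\max_{i\neq k^\star}(Ju)_i-(Ju)_{k^\star}.$$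
   Context: $\bm{e}_k$ is the $k$-th standard basis vector of $\mathbb{R}^K$. Cross-entropy loss: $\ell_{CE}(x,\bm{e}_k;\theta)=-\log\operatorname{softmax}(\theta(x))_k=-\theta(x)_k+\log\sum_{j}e^{\theta(x)_j}$. DLR loss (as used in the paper): $\ell_{DLR}(x,\bm{e}_k;\theta)=\max_{j\neq k}\theta(x)_j-\theta(x)_k$. In the paper this lemma is applied with $J=J_{\bm{D}^\star}$ the constant Jacobian of a ReLU network on an activation cell and $u=u^\star_t$ a direction in the recession cone of that cell, which guarantees the stated affine relation. *)

(* Defs.v *)
From mathcomp Require Import all_boot all_order all_algebra.
From mathcomp Require Import all_classical all_reals all_analysis.
Set Implicit Arguments. Unset Strict Implicit. Unset Printing Implicit Defensive.
Import Order.TTheory GRing.Theory Num.Theory.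
Local Open Scope ring_scope.

Definition ce_loss (R : realType) (K : nat) (z : 'cV[R]_K) (k : 'I_K) : R :=
  - z k 0 + ln (\sum_(j < K) expR (z j 0)).

(* max_{j <> k} of the entries of z (computed in \bar R with seed -oo,
   finite as soon as K >= 2) *)
Definition max_except (R : realType) (K : nat) (v : 'cV[R]_K) (k : 'I_K) : R :=
  fine (\big[Order.max/-oo%E]_(j < K | j != k) ((v j 0)%:E)).

Definition max_all (R : realType) (K : nat) (v : 'cV[R]_K) : R :=
  fine (\big[Order.max/-oo%E]_(j < K) ((v j 0)%:E)).

Definition dlr_loss (R : realType) (K : nat) (z : 'cV[R]_K) (k : 'I_K) : R :=
  max_except z k - z k 0.

(* Main.v *)
Require Import Defs.
From mathcomp Require Import all_boot all_order all_algebra.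
From mathcomp Require Import all_classical all_reals all_analysis.
From mathcomp Require Import ring lra.
Import Order.TTheory GRing.Theory Num.Theory.
Import numFieldNormedType.Exports.
Local Open Scope classical_set_scope.
Local Open Scope ring_scope.

Lemma bigmax_fine (R : realType) (K : nat) (P : pred 'I_K) (v : 'I_K -> R) j :
  P j ->
  (exists2 i, P i & fine (\big[Order.max/-oo%E]_(i < K | P i) (v i)%:E) = v i)
  /\ (forall i, P i -> v i <= fine (\big[Order.max/-oo%E]_(i < K | P i) (v i)%:E)).
Proof.
move=> Pj.
have [i0 Pi0 E] := @eq_bigmax _ _ _ -oo%E j P (fun i => (v i)%:E) Pj (fun i _ => leNye _).
rewrite E /=; split; first by exists i0.
move=> i Pi.
have := @le_bigmax_cond _ _ _ -oo%E i P (fun i => (v i)%:E) Pi.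
by rewrite E lee_fin.
Qed.

Lemma lim_lin (R : realType) (f : R -> R) (L C : R) :
  (forall a, 0 < a -> `|f a - a * L| <= C) ->
  (fun a => f a / a) @ +oo --> L.
Proof.
move=> H; apply/cvgrPdist_le => e e0.
have C0 : 0 <= C by apply: le_trans (H 1 ltr01); exact: normr_ge0.
near=> a.
have a0 : 0 < a by near: a; apply: nbhs_pinfty_gt; rewrite num_real.
have aC : C / e < a by near: a; apply: nbhs_pinfty_gt; rewrite num_real.
have -> : L - f a / a = - ((f a - a * L) / a) by field; rewrite gt_eqF.
rewrite normrN normrM normfV (gtr0_norm a0) ler_pdivrMr //.
apply: le_trans (H a a0) _.
by rewrite -ler_pdivrMl // mulrC ltW.
Unshelve. all: end_near.
Qed.

Lemma ME_spec (R : realType) (K : nat) (z : 'cV[R]_K) (k j : 'I_K) : j != k ->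
  (exists2 i, i != k & max_except z k = z i 0)
  /\ (forall i, i != k -> z i 0 <= max_except z k).
Proof. move=> jk; exact: (@bigmax_fine R K (fun i => i != k) (fun i => z i 0) j jk). Qed.

Lemma MA_spec (R : realType) (K : nat) (z : 'cV[R]_K) (j : 'I_K) :
  (exists i, max_all z = z i 0) /\ (forall i, z i 0 <= max_all z).
Proof.
have [[i _ E] H] := @bigmax_fine R K xpredT (fun i => z i 0) j isT.
by split; [exists i | move=> i'; exact: H].
Qed.

Theorem lemma1 (R : realType) (n K : nat)
  (theta : 'cV[R]_n -> 'cV[R]_K) (xs u : 'cV[R]_n) (J : 'M[R]_(K, n))
  (ks : 'I_K)
  (Haff : forall alpha : R, 0 < alpha ->
     theta (xs + alpha *: u) - theta xs = alpha *: (J *m u)) :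
  ((fun alpha : R =>
      (ce_loss (theta (xs + alpha *: u)) ks - ce_loss (theta xs) ks) / alpha)
     @ +oo --> max_all (J *m u) - (J *m u) ks 0)
  /\
  ((1 < K)%N ->
   (fun alpha : R =>
      (dlr_loss (theta (xs + alpha *: u)) ks - dlr_loss (theta xs) ks) / alpha)
     @ +oo --> max_except (J *m u) ks - (J *m u) ks 0).
Proof.
set z := theta xs; set v := J *m u.
have Hz : forall a, 0 < a -> forall j, theta (xs + a *: u) j 0 = z j 0 + a * v j 0.
  move=> a a0 j; have := Haff a a0; move/eqP; rewrite subr_eq => /eqP ->.
  by rewrite !mxE addrC.
set B := \sum_(j < K) `|z j 0|.
have HB : forall j, - B <= z j 0 <= B.
  move=> j; rewrite -ler_norml /B (bigD1 j) //= lerDl.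
  by apply: sumr_ge0 => i _; exact: normr_ge0.
split.
- have [[jm Ejm] Hm] := MA_spec _ _ v ks.
  have K0 : (0 < K)%N by apply: leq_ltn_trans (ltn_ord ks).
  have lnK0 : 0 <= ln (K%:R : R) by apply: ln_ge0; rewrite ler1n.
  apply: (@lim_lin _ _ _ (B + (B + ln (K%:R : R)) + `|ce_loss z ks|)) => a a0.
  set c := ce_loss z ks; rewrite /ce_loss.
  have -> : \sum_(j < K) expR (theta (xs + a *: u) j 0) = \sum_(j < K) expR (z j 0 + a * v j 0).
    by apply: eq_bigr => j _; rewrite Hz.
  rewrite Hz //.
  set S := \sum_(j < K) expR (z j 0 + a * v j 0).
  have Slo : expR (z jm 0 + a * v jm 0) <= S.
    rewrite /S (bigD1 jm) //= lerDl.
    by apply: sumr_ge0 => i _; exact: expR_ge0.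
  have S0 : 0 < S by apply: lt_le_trans Slo; exact: expR_gt0.
  have Sup : S <= K%:R * expR (B + a * max_all v).
    rewrite /S mulr_natl -[K in _ *+ K]card_ord -sumr_const; apply: ler_sum => j _.
    rewrite ler_expR lerD //; first by case/andP: (HB j).
    by rewrite ler_pM2l.
  have L1 : z jm 0 + a * max_all v <= ln S.
    by rewrite Ejm -[X in X <= _]expRK ler_ln // posrE expR_gt0.
  have L2 : ln S <= ln (K%:R : R) + (B + a * max_all v).
    rewrite -[X in _ <= _ + X]expRK -lnM ?posrE ?expR_gt0 ?ltr0n //.
    by rewrite ler_ln // posrE mulr_gt0 ?expR_gt0 ?ltr0n.
  have := HB jm; have := HB ks; move=> /andP[h1 h2] /andP[h3 h4].
  have h6 := ler_norm c; have h7 := lerNnormlW (lexx `|c|).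
  rewrite mulrBr ler_norml; apply/andP; split; lra.
- move=> K1.
  have [j0 j0k] : exists j0 : 'I_K, j0 != ks.
    case: (eqVneq (val ks) 0%N) => h.
    + exists (Ordinal K1); apply/eqP => /(congr1 val) /=; rewrite h.
      by [].
    + exists (Ordinal (ltn_trans (ltn0Sn 0) K1)); apply/eqP => /(congr1 val) /= h'.
      by move/eqP: h; apply; exact: esym h'.
  have [[jm jmk Ejm] Hm] := ME_spec _ _ v _ _ j0k.
  have [[iz izk Eiz] _] := ME_spec _ _ z _ _ j0k.
  apply: (@lim_lin _ _ _ (B + B)) => a a0.
  rewrite /dlr_loss.
  set w := theta (xs + a *: u).
  have [[iw iwk Eiw] Hw] := ME_spec _ _ w _ _ j0k.
  have hlo := Hw jm jmk.
  have hup : a * v iw 0 <= a * max_except v ks by rewrite ler_pM2l // Hm.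
  rewrite Eiw Eiz /w !Hz // in hlo *.
  rewrite Ejm in hup *.
  have := HB jm; have := HB iw; have := HB iz; move=> /andP[h1 h2] /andP[h3 h4] /andP[h5 h6].
  rewrite mulrBr ler_norml; apply/andP; split; lra.
Qed.
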